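(* Let $\Phi:I\to O$ be a quantum channel, with quantum confusability multigraph $\tilde S_\Phi\subseteq B(H_{in})\otimes O^{op}$ and quantum confusability graph $S_\Phi\subseteq B(H_{in})$. Then $$(\mathrm{id}\otimes\mathrm{tr})(\tilde S_\Phi)=S_\Phi.$$
   Context: All Hilbert spaces are finite dimensional; inner products are linear in the second variable. $H_{in}=\bigoplus_a H^a_{in}$, $H_{out}=\bigoplus_b H^b_{out}$, $I=\bigoplus_a B(H^a_{in})\subseteq B(H_{in})$, $O=\bigoplus_b B(H^b_{out})\subseteq B(H_{out})$, with traces $\mathrm{tr}$ inherited from $B(H_{in}),B(H_{out})$. A quantum channel is a trace-preserving completely positive map $\Phi:I\to O$; $\Phi^*:O\to I$ is its Hilbert–Schmidt adjoint. $e^a_i$ is an orthonormal basis of $H^a_{in}$, $e^a_{ij}$ the matrix units. $O^{op}$ is the opposite algebra of $O$ (product $a*b=ba$), with the same trace. $\mathcal{M}_\Phi=H_{in}\otimes O^{op}$ is the right Hilbert $O^{op}$-module with $(\xi\otimes a)*x=\xi\otimes(a*x)$, $\langle\xi\otimes a,\eta\otimes b\rangle_{O^{op}}=\langle\xi,\eta\rangle a^**b$; $\mathcal{L}(\mathcal{M}_\Phi)\cong B(H_{in})\otimes O^{op}$. $C_\Phi$ is the $O^{op}$-linear map with $C_\Phi(e^a_j\otimes1)=\sum_i e^a_i\otimes\Phi(e^a_{ji})$. A Stinespring module related to $\Phi$ is a pair $(\mathcal{E},W)$ with $\mathcal{E}$ a Hilbert $O^{op}$-module and $W$ an adjointable module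 map $\mathcal{M}_\Phi\to\mathcal{E}$ with $W^*W=C_\Phi$. The quantum confusability multigraph is $\tilde S_\Phi=W^*\mathcal{L}(\mathcal{E})W\subseteq\mathcal{L}(\mathcal{M}_\Phi)\cong B(H_{in})\otimes O^{op}$ for any Stinespring module $(\mathcal{E},W)$ (independent of the choice). The quantum confusability graph is $S_\Phi=V^*\pi(O)'V\subseteq B(H_{in})$, where $(\pi,V,K)$ is any Stinespring representation of $\Phi^*$ (i.e. $\pi:O\to B(K)$ a *-homomorphism, $V:H_{in}\to K$ an isometry, $\Phi^*(x)=V^*\pi(x)V$) and $\pi(O)'$ is the commutant of $\pi(O)$ in $B(K)$; it is independent of the chosen representation. $\mathrm{id}\otimes\mathrm{tr}:B(H_{in})\otimes O^{op}\to B(H_{in})$ is the partial trace. *)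

(* Defs.v *)
From HB Require Import structures.
From mathcomp Require Import all_boot all_order all_algebra.
From mathcomp Require Import complex.
From mathcomp Require Import reals.
Set Implicit Arguments. Unset Strict Implicit. Unset Printing Implicit Defensive.
Import Order.TTheory GRing.Theory Num.Theory.
Local Open Scope ring_scope.

Section QChannels.
Variable C : numClosedFieldType.

Definition mxadj m n (A : 'M[C]_(m, n)) : 'M[C]_(n, m) := (map_mx Num.conj A)^T.

(* Direct sum of full matrix algebras inside B(C^n): the basis vector e_i
   lies in the summand with label b i; the algebra consists of the
   block-diagonal matrices. *)
Definition blockalg n (b : 'I_n -> nat) : pred 'M[C]_n :=
  fun A => [forall i, forall j, (b i != b j) ==> (A i j == 0)].

Definition psd n (A : 'M[C]_n) : Prop :=
  forall v : 'cV[C]_n, 0 <= (mxadj v *m A *m v) 0 0.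

Definition psd_block n r (A : 'I_r -> 'I_r -> 'M[C]_n) : Prop :=
  forall v : 'I_r -> 'cV[C]_n,
    0 <= \sum_(s < r) \sum_(t < r) (mxadj (v s) *m A s t *m v t) 0 0.

Definition linear_on m n p q (P : pred 'M[C]_(m, n)) (f : 'M[C]_(m, n) -> 'M[C]_(p, q)) :=
  forall a x y, P x -> P y -> f (a *: x + y) = a *: f x + f y.

Definition quantum_channel nI (bI : 'I_nI -> nat) nO (bO : 'I_nO -> nat)
    (Phi : 'M[C]_nI -> 'M[C]_nO) : Prop :=
  [/\ forall x, x \in blockalg bI -> Phi x \in blockalg bO,
      linear_on (blockalg bI) Phi,
      forall x, x \in blockalg bI -> \tr (Phi x) = \tr x &
      (* complete positivity *)
      forall r (A : 'I_r -> 'I_r -> 'M[C]_nI),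
        (forall s t, A s t \in blockalg bI) -> psd_block A ->
        psd_block (fun s t => Phi (A s t))].

Definition hs_adjoint nI (bI : 'I_nI -> nat) nO (bO : 'I_nO -> nat)
    (Phi : 'M[C]_nI -> 'M[C]_nO) (Phis : 'M[C]_nO -> 'M[C]_nI) : Prop :=
  (forall y, y \in blockalg bO -> Phis y \in blockalg bI) /\
  (forall x y, x \in blockalg bI -> y \in blockalg bO ->
     \tr (mxadj (Phis y) *m x) = \tr (mxadj y *m Phi x)).

Definition star_hom nO (bO : 'I_nO -> nat) p (pi : 'M[C]_nO -> 'M[C]_p) : Prop :=
  [/\ linear_on (blockalg bO) pi,
      forall x y, x \in blockalg bO -> y \in blockalg bO -> pi (x *m y) = pi x *m pi y &
      forall x, x \in blockalg bO -> pi (mxadj x) = mxadj (pi x)].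

Definition stinespring_rep nI nO (bO : 'I_nO -> nat) (Psi : 'M[C]_nO -> 'M[C]_nI)
    p (pi : 'M[C]_nO -> 'M[C]_p) (V : 'M[C]_(p, nI)) : Prop :=
  [/\ star_hom bO pi, mxadj V *m V = 1%:M &
      forall x, x \in blockalg bO -> Psi x = mxadj V *m pi x *m V].

(* S_Phi = V^* pi(O)' V *)
Definition in_conf_graph nI nO (bO : 'I_nO -> nat) p (pi : 'M[C]_nO -> 'M[C]_p)
    (V : 'M[C]_(p, nI)) (Y : 'M[C]_nI) : Prop :=
  exists2 T : 'M[C]_p,
    (forall x, x \in blockalg bO -> T *m pi x = pi x *m T) & Y = mxadj V *m T *m V.

(* ---- Hilbert O^op-modules.  O^op has product a * b := b *m a. ---- *)
Definition hilbert_Oop_module nO (bO : 'I_nO -> nat) (E : lmodType C)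
    (ract : E -> 'M[C]_nO -> E) (ip : E -> E -> 'M[C]_nO) : Prop :=
  [/\ forall c (xi eta : E) a, a \in blockalg bO ->
        ract (c *: xi + eta) a = c *: ract xi a + ract eta a,
      forall c xi a b, a \in blockalg bO -> b \in blockalg bO ->
        ract xi (c *: a + b) = c *: ract xi a + ract xi b,
      (* xi * (a * b) = (xi * a) * b, with a * b = b a in O *)
      forall xi a b, a \in blockalg bO -> b \in blockalg bO ->
        ract xi (b *m a) = ract (ract xi a) b,
      forall xi, ract xi 1%:M = xi &
      [/\ forall xi eta, ip xi eta \in blockalg bO,
          forall c xi eta eta', ip xi (c *: eta + eta') = c *: ip xi eta + ip xi eta',
          (* <xi, eta * a> = <xi, eta> * a = a <xi, eta> *)
          forall xi eta a, a \in blockalg bO -> ip xi (ract eta a) = a *m ip xi eta,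
          forall xi eta, ip eta xi = mxadj (ip xi eta) &
          [/\ forall xi, psd (ip xi xi) &
              forall xi, ip xi xi = 0 -> xi = 0]]].

Definition in_LE nO (bO : 'I_nO -> nat) (E : lmodType C)
    (ract : E -> 'M[C]_nO -> E) (ip : E -> E -> 'M[C]_nO) (T : E -> E) : Prop :=
  [/\ forall c xi eta, T (c *: xi + eta) = c *: T xi + T eta,
      forall xi a, a \in blockalg bO -> T (ract xi a) = ract (T xi) a &
      exists T' : E -> E, forall xi eta, ip (T xi) eta = ip xi (T' eta)].

(* ---- The module M_Phi = H_in (x) O^op, H_in = C^nI: an element is
   f = sum_i e_i (x) f i, with f i in O. ---- *)
Definition inM nI nO (bO : 'I_nO -> nat) (f : 'I_nI -> 'M[C]_nO) : Prop :=
  forall i, f i \in blockalg bO.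
(* (xi (x) a) * x = xi (x) (a * x) = xi (x) (x a) *)
Definition Mract nI nO (f : 'I_nI -> 'M[C]_nO) (x : 'M[C]_nO) : 'I_nI -> 'M[C]_nO :=
  fun i => x *m f i.
(* <xi (x) a, eta (x) b> = <xi,eta> a^* * b = <xi,eta> b a^* *)
Definition Mip nI nO (f g : 'I_nI -> 'M[C]_nO) : 'M[C]_nO :=
  \sum_(i < nI) g i *m mxadj (f i).
Definition Mlin nI nO (c : C) (f g : 'I_nI -> 'M[C]_nO) : 'I_nI -> 'M[C]_nO :=
  fun i => c *: f i + g i.

(* L(M_Phi) = B(H_in) (x) O^op: X = sum_{i,j} e_ij (x) X i j, acting by
   (e_ij (x) x)(e_j (x) a) = e_i (x) (x * a) = e_i (x) (a x). *)
Definition Mact nI nO (X : 'I_nI -> 'I_nI -> 'M[C]_nO) (f : 'I_nI -> 'M[C]_nO) :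
  'I_nI -> 'M[C]_nO := fun i => \sum_(j < nI) f j *m X i j.

(* C_Phi = sum_a sum_{i,j} e^a_ij (x) Phi(e^a_ji) *)
Definition CPhi nI (bI : 'I_nI -> nat) nO (Phi : 'M[C]_nI -> 'M[C]_nO) :
  'I_nI -> 'I_nI -> 'M[C]_nO :=
  fun i j => if bI i == bI j then Phi (delta_mx j i) else 0.

Definition stinespring_module nI (bI : 'I_nI -> nat) nO (bO : 'I_nO -> nat)
    (Phi : 'M[C]_nI -> 'M[C]_nO) (E : lmodType C)
    (ract : E -> 'M[C]_nO -> E) (ip : E -> E -> 'M[C]_nO)
    (W : ('I_nI -> 'M[C]_nO) -> E) (Ws : E -> 'I_nI -> 'M[C]_nO) : Prop :=
  [/\ forall c f g, inM bO f -> inM bO g -> W (Mlin c f g) = c *: W f + W g,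
      forall f x, inM bO f -> x \in blockalg bO -> W (Mract f x) = ract (W f) x,
      forall xi, inM bO (Ws xi),
      forall f xi, inM bO f -> ip (W f) xi = Mip f (Ws xi) &
      (* W^* W = C_Phi *)
      forall f, inM bO f -> forall i, Ws (W f) i = Mact (CPhi bI Phi) f i].

(* X lies in the quantum confusability multigraph W^* L(E) W *)
Definition in_conf_multigraph nI nO (bO : 'I_nO -> nat) (E : lmodType C)
    (ract : E -> 'M[C]_nO -> E) (ip : E -> E -> 'M[C]_nO)
    (W : ('I_nI -> 'M[C]_nO) -> E) (Ws : E -> 'I_nI -> 'M[C]_nO)
    (X : 'I_nI -> 'I_nI -> 'M[C]_nO) : Prop :=
  (forall i j, X i j \in blockalg bO) /\
  exists2 T : E -> E, in_LE bO ract ip T &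
    forall f, inM bO f -> forall i, Mact X f i = Ws (T (W f)) i.

Definition ptrace nI nO (X : 'I_nI -> 'I_nI -> 'M[C]_nO) : 'M[C]_nI :=
  \matrix_(i, j) \tr (X i j).

End QChannels.

(* Main.v *)
Require Import Defs.
From HB Require Import structures.
From mathcomp Require Import all_boot all_order all_algebra.
From mathcomp Require Import complex.
From mathcomp Require Import reals.
From Stdlib Require Import FunctionalExtensionality IndefiniteDescription.
Set Implicit Arguments. Unset Strict Implicit. Unset Printing Implicit Defensive.
Import Order.TTheory GRing.Theory Num.Theory.
Local Open Scope ring_scope.


Section MxAdj.
Variable C : numClosedFieldType.

Lemma mxadjE m n (A : 'M[C]_(m, n)) i j : mxadj A i j = (A j i)^*.
Proof. by rewrite /mxadj !mxE. Qed.

Lemma mxadjK m n (A : 'M[C]_(m, n)) : mxadj (mxadj A) = A.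
Proof. by apply/matrixP => i j; rewrite !mxadjE conjCK. Qed.

Lemma mxadjM m n k (A : 'M[C]_(m, n)) (B : 'M[C]_(n, k)) :
  mxadj (A *m B) = mxadj B *m mxadj A.
Proof.
by rewrite /mxadj map_mxM trmx_mul.
Qed.

Lemma mxadjD m n (A B : 'M[C]_(m, n)) : mxadj (A + B) = mxadj A + mxadj B.
Proof. by apply/matrixP => i j; rewrite !mxE ?mxadjE ?rmorphD. Qed.

Lemma mxadjZ m n (c : C) (A : 'M[C]_(m, n)) : mxadj (c *: A) = c^* *: mxadj A.
Proof. by apply/matrixP => i j; rewrite !mxE ?mxadjE ?rmorphM. Qed.

Lemma mxadjN m n (A : 'M[C]_(m, n)) : mxadj (- A) = - mxadj A.
Proof. by apply/matrixP => i j; rewrite !mxE ?mxadjE ?rmorphN. Qed.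

Lemma mxadj0 m n : mxadj (0 : 'M[C]_(m, n)) = 0.
Proof. by apply/matrixP => i j; rewrite !mxE ?mxadjE ?mxE ?rmorph0. Qed.

Lemma mxadj_scalar n (a : C) : mxadj (a%:M : 'M[C]_n) = a^*%:M.
Proof.
apply/matrixP => i j; rewrite mxadjE !mxE eq_sym.
by case: (i == j); rewrite ?rmorph0 ?mulr1n ?mulr0n.
Qed.

Lemma mxadj1 n : mxadj (1%:M : 'M[C]_n) = 1%:M.
Proof. by rewrite mxadj_scalar rmorph1. Qed.

Lemma mxadj_sum m n I (r : seq I) (P : pred I) (F : I -> 'M[C]_(m, n)) :
  mxadj (\sum_(i <- r | P i) F i) = \sum_(i <- r | P i) mxadj (F i).
Proof.
apply: (big_morph (@mxadj C m n)); [exact: mxadjD | exact: mxadj0].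
Qed.

Lemma mxtrace_adj n (A : 'M[C]_n) : \tr (mxadj A) = (\tr A)^*.
Proof. by rewrite /mxtrace rmorph_sum; apply: eq_bigr => i _; rewrite mxadjE. Qed.

Lemma mxadj_inv n (A : 'M[C]_n) : mxadj (invmx A) = invmx (mxadj A).
Proof. by rewrite /mxadj map_invmx trmx_inv. Qed.

Lemma mxtrace_delta n (A : 'M[C]_n) i j : \tr (A *m delta_mx i j) = A j i.
Proof.
rewrite /mxtrace (bigD1 j) //= big1 ?addr0.
  rewrite mxE (bigD1 i) //= big1 ?addr0; first by rewrite mxE !eqxx mulr1.
  by move=> k /negbTE kNi; rewrite mxE kNi mulr0.
move=> k /negbTE kNj; rewrite mxE big1 // => l _.
by rewrite mxE kNj andbF mulr0.
Qed.

Lemma sum_conj_eq0 (I : eqType) (r : seq I) (P : pred I) (F : I -> C) :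
  \sum_(i <- r | P i) (F i)^* * F i = 0 -> forall i, i \in r -> P i -> F i = 0.
Proof.
move=> /eqP; rewrite psumr_eq0; last by move=> i _; rewrite mulrC mul_conjC_ge0.
move=> /allP H i ir Pi; move: (H i ir); rewrite Pi /= mulrC mul_conjC_eq0.
by move/eqP.
Qed.

Lemma adjmx_diag m n (N : 'M[C]_(m, n)) j :
  (mxadj N *m N) j j = \sum_k (N k j)^* * N k j.
Proof. by rewrite mxE; apply: eq_bigr => k _; rewrite mxadjE. Qed.

Lemma adjmx_diag_ge0 m n (N : 'M[C]_(m, n)) j : 0 <= (mxadj N *m N) j j.
Proof. by rewrite adjmx_diag sumr_ge0 // => k _; rewrite mulrC mul_conjC_ge0. Qed.

Lemma adjmx_diag_eq0 m n (N : 'M[C]_(m, n)) j :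
  (mxadj N *m N) j j = 0 -> forall i, N i j = 0.
Proof.
rewrite adjmx_diag => H i.
by apply: (sum_conj_eq0 H); rewrite ?mem_index_enum.
Qed.

Lemma adjmx_eq0 m n (N : 'M[C]_(m, n)) : mxadj N *m N = 0 -> N = 0.
Proof.
move=> H; apply/matrixP => i j; rewrite [RHS]mxE.
by apply: adjmx_diag_eq0; rewrite H mxE.
Qed.

Lemma tr_adjmx_eq0 m n (N : 'M[C]_(m, n)) : \tr (mxadj N *m N) = 0 -> N = 0.
Proof.
move=> H; apply/matrixP => i j; rewrite [RHS]mxE.
apply: adjmx_diag_eq0; move: H; rewrite /mxtrace.
move/eqP; rewrite psumr_eq0; last by move=> k _; exact: adjmx_diag_ge0.
by move/allP/(_ j); rewrite mem_index_enum => /(_ isT) /= /eqP.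
Qed.

Lemma dot_delta n (v : 'cV[C]_n) k : (mxadj (delta_mx k 0 : 'cV[C]_n) *m v) 0 0 = v k 0.
Proof.
rewrite mxE (bigD1 k) //= big1 ?addr0.
  by rewrite mxadjE mxE !eqxx rmorph1 mul1r.
by move=> l /negbTE lk; rewrite mxadjE mxE lk rmorph0 mul0r.
Qed.

Lemma colmx_eq m n (A B : 'M[C]_(m, n)) :
  (forall v : 'cV[C]_n, A *m v = B *m v) -> A = B.
Proof.
move=> H; apply/matrixP => i k.
have := congr1 (fun M : 'M[C]_(m,1) => M i 0) (H (delta_mx k 0)).
by rewrite -!colE !mxE.
Qed.

End MxAdj.

Section Blockalg.
Variable C : numClosedFieldType.
Variables (n : nat) (b : 'I_n -> nat).
Local Notation O := (blockalg (C:=C) b).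

Lemma blockalgP (A : 'M[C]_n) : reflect (forall i j, b i != b j -> A i j = 0) (A \in O).
Proof.
apply: (iffP idP).
  by move=> /forallP H i j bij; move: (H i) => /forallP /(_ j); rewrite bij /= => /eqP.
move=> H; apply/forallP => i; apply/forallP => j; apply/implyP => bij.
by rewrite H.
Qed.

Lemma blockalg0 : (0 : 'M[C]_n) \in O.
Proof. by apply/blockalgP => i j _; rewrite mxE. Qed.

Lemma blockalg1 : (1%:M : 'M[C]_n) \in O.
Proof.
apply/blockalgP => i j bij; rewrite mxE.
by case: (eqVneq i j) bij => [->|_]; rewrite ?eqxx // mulr0n.
Qed.

Lemma blockalgD (A B : 'M[C]_n) : A \in O -> B \in O -> A + B \in O.
Proof.
move=> /blockalgP hA /blockalgP hB; apply/blockalgP => i j bij.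
by rewrite mxE hA ?hB ?addr0.
Qed.

Lemma blockalgZ c (A : 'M[C]_n) : A \in O -> c *: A \in O.
Proof. by move=> /blockalgP hA; apply/blockalgP => i j bij; rewrite mxE hA ?mulr0. Qed.

Lemma blockalgN (A : 'M[C]_n) : A \in O -> - A \in O.
Proof. by move=> hA; rewrite -scaleN1r blockalgZ. Qed.

Lemma blockalgB (A B : 'M[C]_n) : A \in O -> B \in O -> A - B \in O.
Proof. by move=> hA hB; rewrite blockalgD ?blockalgN. Qed.

Lemma blockalgM (A B : 'M[C]_n) : A \in O -> B \in O -> A *m B \in O.
Proof.
move=> /blockalgP hA /blockalgP hB; apply/blockalgP => i j bij.
rewrite mxE big1 // => k _.
case: (eqVneq (b i) (b k)) => [bik|bik]; last by rewrite hA ?mul0r.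
by rewrite hB ?mulr0 // -bik.
Qed.

Lemma blockalg_adj (A : 'M[C]_n) : A \in O -> mxadj A \in O.
Proof.
move=> /blockalgP hA; apply/blockalgP => i j bij.
by rewrite mxadjE hA ?rmorph0 // eq_sym.
Qed.

Lemma blockalg_delta i j : b i == b j -> (delta_mx i j : 'M[C]_n) \in O.
Proof.
move=> /eqP bij; apply/blockalgP => k l bkl; rewrite mxE.
case: andP => [[/eqP eki /eqP elj]|//].
by move: bkl; rewrite eki elj bij eqxx.
Qed.

Lemma blockalg_sum I (r : seq I) (P : pred I) (F : I -> 'M[C]_n) :
  (forall i, P i -> F i \in O) -> \sum_(i <- r | P i) F i \in O.
Proof.
move=> H; elim/big_ind: _ => //; [exact: blockalg0 | exact: blockalgD].
Qed.

Lemma blockalg_tr_eq0 (D : 'M[C]_n) :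
  D \in O -> (forall c, c \in O -> \tr (c *m D) = 0) -> D = 0.
Proof. by move=> hD H; apply: tr_adjmx_eq0; rewrite H // blockalg_adj. Qed.

End Blockalg.


Section Proj.
Variable C : numClosedFieldType.

Lemma mxadj_tr m n (A : 'M[C]_(m, n)) : mxadj A^T = (mxadj A)^T.
Proof. by apply/matrixP => i j; rewrite !mxE. Qed.

Lemma orth_proj_base r p (B : 'M[C]_(r, p)) : row_free B -> exists P0 : 'M[C]_p,
  [/\ mxadj P0 = P0, (forall v : 'cV[C]_p, (v^T <= B)%MS -> P0 *m v = v) &
      (forall v : 'cV[C]_p, ((P0 *m v)^T <= B)%MS)].
Proof.
move=> Bfree.
set G := B *m mxadj B.
have Gu : G \in unitmx.
  rewrite -row_free_unit; apply: inj_row_free => v vG0.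
  have H : mxadj (mxadj (v *m B)) *m mxadj (v *m B) = 0.
    by rewrite mxadjK mxadjM mulmxA -(mulmxA v) vG0 mul0mx.
  have /eqP := adjmx_eq0 H; rewrite -mxadj0 => /eqP.
  move=> /(congr1 (@mxadj C _ _)); rewrite !mxadjK => /eqP.
  by rewrite mulmx_free_eq0 // => /eqP.
have GA : mxadj G = G by rewrite /G mxadjM mxadjK.
exists (mxadj B *m invmx G *m B)^T; split.
- by rewrite mxadj_tr !mxadjM mxadjK mxadj_inv GA mulmxA.
- move=> v /submxP [D hD].
  rewrite -[v]trmxK -[_ *m v^T^T]trmxK trmx_mul !trmxK.
  rewrite hD !mulmxA -(mulmxA D B) -/G -(mulmxA D G) mulmxV // mulmx1.
  by rewrite -hD trmxK.
- move=> v; rewrite trmx_mul trmxK.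
  by rewrite mulmxA submxMl.
Qed.

Lemma orth_proj m p (S : 'M[C]_(m, p)) : exists P0 : 'M[C]_p,
  [/\ mxadj P0 = P0, (forall v : 'cV[C]_p, (v^T <= S)%MS -> P0 *m v = v) &
      (forall v : 'cV[C]_p, ((P0 *m v)^T <= S)%MS)].
Proof.
have [P0 [h1 h2 h3]] := orth_proj_base (row_base_free S).
exists P0; split => //.
- by move=> v hv; apply: h2; rewrite (eq_row_base S).
- by move=> v; rewrite -(eq_row_base S).
Qed.

End Proj.


Lemma fchoice (A B : Type) (P : A -> B -> Prop) :
  (forall a, exists b, P a b) -> exists f : A -> B, forall a, P a (f a).
Proof.
move=> H; exists (fun a => proj1_sig (constructive_indefinite_description _ (H a))).
by move=> a; exact: proj2_sig (constructive_indefinite_description _ (H a)).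
Qed.

Section Main.
Variable C : numClosedFieldType.
Variables (nI nO : nat) (bI : 'I_nI -> nat) (bO : 'I_nO -> nat).
Variables (Phi : 'M[C]_nI -> 'M[C]_nO) (Phis : 'M[C]_nO -> 'M[C]_nI).
Hypothesis hQC : quantum_channel bI bO Phi.
Hypothesis hadj : hs_adjoint bI bO Phi Phis.
Variables (E : lmodType C) (ract : E -> 'M[C]_nO -> E) (ip : E -> E -> 'M[C]_nO).
Variables (W : ('I_nI -> 'M[C]_nO) -> E) (Ws : E -> 'I_nI -> 'M[C]_nO).
Hypothesis hH : hilbert_Oop_module bO ract ip.
Hypothesis hS : stinespring_module bI bO Phi ract ip W Ws.
Variables (p : nat) (pi : 'M[C]_nO -> 'M[C]_p) (V : 'M[C]_(p, nI)).
Hypothesis hR : stinespring_rep bO Phis pi V.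

Local Notation O := (blockalg (C:=C) bO).
Local Notation M := (inM (C:=C) (nI:=nI) bO).

Lemma ractD xi eta a : a \in O -> ract (xi + eta) a = ract xi a + ract eta a.
Proof. move=> aO; move: hH; rewrite /hilbert_Oop_module => -[h1 _ _ _ _]. by have := h1 1 xi eta a aO; rewrite !scale1r. Qed.

Lemma ract0 a : a \in O -> ract 0 a = 0.
Proof. by move=> aO; have h := ractD 0 0 aO; rewrite addr0 in h; apply: (addrI (ract 0 a)); rewrite -h addr0. Qed.

Lemma ractZ c xi a : a \in O -> ract (c *: xi) a = c *: ract xi a.
Proof. move=> aO; move: hH; rewrite /hilbert_Oop_module => -[h1 _ _ _ _]. by have := h1 c xi 0 a aO; rewrite !addr0 ract0 // addr0. Qed.

Lemma ract_sum I (r : seq I) (F : I -> E) a : a \in O ->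
  ract (\sum_(k <- r) F k) a = \sum_(k <- r) ract (F k) a.
Proof.
move=> aO; elim: r => [|k r IH]; first by rewrite !big_nil ract0.
by rewrite !big_cons ractD // IH.
Qed.

Lemma ractM xi a b : a \in O -> b \in O -> ract xi (b *m a) = ract (ract xi a) b.
Proof. by move: hH; rewrite /hilbert_Oop_module => -[] _ _ h3 _ _; apply: h3. Qed.

Lemma ip_in xi eta : ip xi eta \in O.
Proof. by move: hH; rewrite /hilbert_Oop_module => -[] _ _ _ _ [h1 _ _ _ _]. Qed.

Lemma ipC xi eta : ip eta xi = mxadj (ip xi eta).
Proof. by move: hH; rewrite /hilbert_Oop_module => -[] _ _ _ _ [_ _ _ h4 _]. Qed.

Lemma ipDr xi eta eta' : ip xi (eta + eta') = ip xi eta + ip xi eta'.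
Proof. move: hH; rewrite /hilbert_Oop_module => -[_ _ _ _ [_ h2 _ _ _]]. by have := h2 1 xi eta eta'; rewrite !scale1r. Qed.

Lemma ip0r xi : ip xi 0 = 0.
Proof. by have h := ipDr xi 0 0; rewrite addr0 in h; apply: (addrI (ip xi 0)); rewrite -h addr0. Qed.

Lemma ipZr c xi eta : ip xi (c *: eta) = c *: ip xi eta.
Proof. move: hH; rewrite /hilbert_Oop_module => -[_ _ _ _ [_ h2 _ _ _]]. by have := h2 c xi eta 0; rewrite !addr0 ip0r addr0. Qed.

Lemma ip_sumr I (r : seq I) (c : I -> C) (F : I -> E) xi :
  ip xi (\sum_(k <- r) c k *: F k) = \sum_(k <- r) c k *: ip xi (F k).
Proof.
elim: r => [|k r IH]; first by rewrite !big_nil ip0r.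
by rewrite !big_cons ipDr ipZr IH.
Qed.

Lemma ip_suml I (r : seq I) (c : I -> C) (F : I -> E) eta :
  ip (\sum_(k <- r) c k *: F k) eta = \sum_(k <- r) (c k)^* *: ip (F k) eta.
Proof.
rewrite ipC ip_sumr mxadj_sum; apply: eq_bigr => k _.
by rewrite mxadjZ -ipC.
Qed.

Lemma ip_ractr xi eta a : a \in O -> ip xi (ract eta a) = a *m ip xi eta.
Proof. by move: hH; rewrite /hilbert_Oop_module => -[] _ _ _ _ [_ _ h3 _ _]; apply: h3. Qed.

Lemma ip_ractl xi eta a : a \in O -> ip (ract xi a) eta = ip xi eta *m mxadj a.
Proof. by move=> aO; rewrite ipC ip_ractr // mxadjM -ipC. Qed.

Lemma ip_def xi : (forall c, c \in O -> \tr (c *m ip xi xi) = 0) -> xi = 0.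
Proof.
move=> H; move: hH; rewrite /hilbert_Oop_module => -[] _ _ _ _ [_ _ _ _ [_ h6]]; apply: h6.
exact: blockalg_tr_eq0 (ip_in xi xi) H.
Qed.

Definition sip xi eta := \tr (ip xi eta).

Lemma sipC xi eta : sip eta xi = (sip xi eta)^*.
Proof. by rewrite /sip ipC mxtrace_adj. Qed.

Lemma sip_ractr xi eta a : a \in O -> sip xi (ract eta a) = \tr (a *m ip xi eta).
Proof. by move=> aO; rewrite /sip ip_ractr. Qed.

Lemma sip_ractl xi eta a : a \in O -> sip (ract xi (mxadj a)) eta = \tr (a *m ip xi eta).
Proof.
move=> aO; rewrite /sip ip_ractl ?blockalg_adj // mxadjK.
by rewrite mxtrace_mulC.
Qed.

Lemma sip_suml I (r : seq I) (c : I -> C) (F : I -> E) eta :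
  sip (\sum_(k <- r) c k *: F k) eta = \sum_(k <- r) (c k)^* * sip (F k) eta.
Proof.
rewrite /sip ip_suml raddf_sum; apply: eq_bigr => k _.
  exact: mxtraceZ.
Qed.

Lemma sipDr xi eta eta' : sip xi (eta + eta') = sip xi eta + sip xi eta'.
Proof. by rewrite /sip ipDr mxtraceD. Qed.

Lemma sipZr c xi eta : sip xi (c *: eta) = c * sip xi eta.
Proof. by rewrite /sip ipZr mxtraceZ. Qed.

Lemma W_lin c f g : M f -> M g -> W (fun i => c *: f i + g i) = c *: W f + W g.
Proof. by move: hS; rewrite /stinespring_module => -[h1 _ _ _ _]; apply: h1. Qed.

Lemma W_ract f x : M f -> x \in O -> W (Mract f x) = ract (W f) x.
Proof. by move: hS; rewrite /stinespring_module => -[_ h2 _ _ _]; apply: h2. Qed.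

Lemma Ws_in xi : M (Ws xi).
Proof. by move: hS; rewrite /stinespring_module => -[_ _ h3 _ _]. Qed.

Lemma ip_W f xi : M f -> ip (W f) xi = Mip f (Ws xi).
Proof. by move: hS; rewrite /stinespring_module => -[_ _ _ h4 _]; apply: h4. Qed.

Lemma WsW f i : M f -> Ws (W f) i = Mact (CPhi bI Phi) f i.
Proof. by move: hS; rewrite /stinespring_module => -[_ _ _ _ h5] fM; apply: h5. Qed.

Lemma M0 : M (fun _ => 0).
Proof. by move=> i; exact: blockalg0. Qed.

Lemma M_lin c f g : M f -> M g -> M (fun i => c *: f i + g i).
Proof. by move=> hf hg i; rewrite blockalgD ?blockalgZ. Qed.

Lemma M_ract f x : M f -> x \in O -> M (Mract f x).
Proof. by move=> hf hx i; rewrite /Mract blockalgM. Qed.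

Lemma W0 : W (fun _ => 0) = 0.
Proof.
have h := W_lin 1 M0 M0.
have e : (fun _ : 'I_nI => 1 *: (0 : 'M[C]_nO) + 0) = (fun _ => 0).
  by apply: functional_extensionality => i; rewrite scaler0 addr0.
rewrite e scale1r in h; apply: (addrI (W (fun _ => 0))); by rewrite -h addr0.
Qed.

Lemma W_sum I (r : seq I) (c : I -> C) (F : I -> 'I_nI -> 'M[C]_nO) :
  (forall k, M (F k)) ->
  W (fun i => \sum_(k <- r) c k *: F k i) = \sum_(k <- r) c k *: W (F k).
Proof.
move=> hF; elim: r => [|k r IH].
  rewrite big_nil -W0; congr W; apply: functional_extensionality => i.
  by rewrite big_nil.
have e : (fun i => \sum_(k0 <- k :: r) c k0 *: F k0 i) =
         (fun i => c k *: F k i + \sum_(k0 <- r) c k0 *: F k0 i).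
  by apply: functional_extensionality => i; rewrite big_cons.
rewrite e W_lin //; last by move=> i; apply: blockalg_sum => k0 _; rewrite blockalgZ ?hF.
by rewrite IH big_cons.
Qed.

Definition eps (i : 'I_nI) : 'I_nI -> 'M[C]_nO := fun j => if j == i then 1%:M else 0.

Lemma M_eps i : M (eps i).
Proof. by move=> j; rewrite /eps /=; case: ifP => _; [exact: blockalg1 | exact: blockalg0]. Qed.

Lemma Ws_eps xi i : Ws xi i = ip (W (eps i)) xi.
Proof.
rewrite ip_W; last exact: M_eps.
rewrite /Mip (bigD1 i) //= big1 ?addr0.
  by rewrite /eps /= eqxx mxadj1 mulmx1.
by move=> j /negbTE ji; rewrite /eps /= ji mxadj0 mulmx0.
Qed.

Lemma Mact_eps X i j : Mact X (eps j) i = X i j.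
Proof.
rewrite /Mact (bigD1 j) //= big1 ?addr0; first by rewrite /eps /= eqxx mul1mx.
by move=> k /negbTE kj; rewrite /eps /= kj mul0mx.
Qed.

Lemma W_decomp f : M f -> W f = \sum_j ract (W (eps j)) (f j).
Proof.
move=> hf.
have e : f = (fun i => \sum_j 1 *: Mract (eps j) (f j) i).
  apply: functional_extensionality => i; rewrite (bigD1 i) //= big1 ?addr0.
    by rewrite /Mract /eps /= eqxx mulmx1 scale1r.
  by move=> j /negbTE ij; rewrite /Mract /eps /= eq_sym ij mulmx0 scaler0.
rewrite {1}e W_sum; last by move=> j; apply: M_ract; [exact: M_eps | exact: hf].
by apply: eq_bigr => j _; rewrite scale1r W_ract //; exact: M_eps.
Qed.

Lemma pi_lin c x y : x \in O -> y \in O -> pi (c *: x + y) = c *: pi x + pi y.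
Proof. by move: hR; rewrite /stinespring_rep /star_hom => -[[h1 _ _] _ _]; apply: h1. Qed.

Lemma piM x y : x \in O -> y \in O -> pi (x *m y) = pi x *m pi y.
Proof. by move: hR; rewrite /stinespring_rep /star_hom => -[[_ h2 _] _ _]; apply: h2. Qed.

Lemma pi_adj x : x \in O -> pi (mxadj x) = mxadj (pi x).
Proof. by move: hR; rewrite /stinespring_rep /star_hom => -[[_ _ h3] _ _]; apply: h3. Qed.

Lemma VV : mxadj V *m V = 1%:M.
Proof. by move: hR; rewrite /stinespring_rep => -[_ h _]. Qed.

Lemma PhisE x : x \in O -> Phis x = mxadj V *m pi x *m V.
Proof. by move: hR; rewrite /stinespring_rep => -[_ _ h]; apply: h. Qed.

Lemma pi0 : pi 0 = 0.
Proof.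
have h := pi_lin 1 (blockalg0 C bO) (blockalg0 C bO); rewrite !scale1r addr0 in h.
by apply: (addrI (pi 0)); rewrite -h addr0.
Qed.

Lemma piD x y : x \in O -> y \in O -> pi (x + y) = pi x + pi y.
Proof. by move=> hx hy; have := pi_lin 1 hx hy; rewrite !scale1r. Qed.

Lemma piZ c x : x \in O -> pi (c *: x) = c *: pi x.
Proof. by move=> hx; have := pi_lin c hx (blockalg0 C bO); rewrite !addr0 pi0 addr0. Qed.

Lemma pi_sum I (r : seq I) (F : I -> 'M[C]_nO) :
  (forall k, F k \in O) -> pi (\sum_(k <- r) F k) = \sum_(k <- r) pi (F k).
Proof.
move=> hF; elim: r => [|k r IH]; first by rewrite !big_nil pi0.
rewrite !big_cons piD ?IH //; exact: blockalg_sum.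
Qed.

Definition Rm (f : 'I_nI -> 'M[C]_nO) : 'cV[C]_p := \sum_j pi (f j) *m col j V.

Lemma Rm_lin c f g : M f -> M g -> Rm (fun i => c *: f i + g i) = c *: Rm f + Rm g.
Proof.
move=> hf hg; rewrite /Rm scaler_sumr -big_split; apply: eq_bigr => j _ /=.
by rewrite pi_lin // mulmxDl scalemxAl.
Qed.

Lemma Rm_sum I (r : seq I) (c : I -> C) (F : I -> 'I_nI -> 'M[C]_nO) :
  (forall k, M (F k)) ->
  Rm (fun i => \sum_(k <- r) c k *: F k i) = \sum_(k <- r) c k *: Rm (F k).
Proof.
move=> hF; rewrite /Rm.
have e : forall j, pi (\sum_(k <- r) c k *: F k j) *m col j V =
    \sum_(k <- r) c k *: (pi (F k j) *m col j V).
  move=> j; rewrite pi_sum; last by move=> k; rewrite blockalgZ ?hF.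
  rewrite mulmx_suml; apply: eq_bigr => k _; by rewrite piZ ?hF // scalemxAl.
rewrite (eq_bigr _ (fun j _ => e j)) exchange_big; apply: eq_bigr => k _.
by rewrite scaler_sumr.
Qed.

Lemma Rm_ract f x : M f -> x \in O -> Rm (Mract f x) = pi x *m Rm f.
Proof.
move=> hf hx; rewrite /Rm mulmx_sumr; apply: eq_bigr => j _.
by rewrite /Mract (piM hx (hf j)) mulmxA.
Qed.

Lemma dot_col (A : 'M[C]_p) j i :
  (mxadj (col j V) *m A *m col i V) 0 0 = (mxadj V *m A *m V) j i.
Proof.
rewrite !colE mxadjM -!mulmxA dot_delta.
by rewrite !mulmxA -colE mxE.
Qed.

Lemma Phis_adj y : y \in O -> Phis (mxadj y) = mxadj (Phis y).
Proof.
move=> hy; rewrite !PhisE ?blockalg_adj // pi_adj //.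
by rewrite !mxadjM mxadjK mulmxA.
Qed.

Lemma gram_term f g j i : f \in O -> g \in O ->
  \tr (g *m CPhi bI Phi j i *m mxadj f) = Phis (mxadj f *m g) j i.
Proof.
move=> hf hg; have hz : mxadj f *m g \in O by rewrite blockalgM ?blockalg_adj.
rewrite /CPhi; case: ifP => bji.
  rewrite mxtrace_mulC mulmxA.
  have hd : (delta_mx i j : 'M[C]_nI) \in blockalg bI by apply: blockalg_delta; rewrite eq_sym.
  move: hadj => [_ h2].
  have := h2 (delta_mx i j) (mxadj (mxadj f *m g)) hd (blockalg_adj hz).
  rewrite mxadjK => <-.
  by rewrite Phis_adj // mxadjK mxtrace_delta.
move: hadj => [h1 _]; move/blockalgP: (h1 _ hz) => ->; last by rewrite bji.
by rewrite mulmx0 mul0mx mxtrace0.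
Qed.

Lemma gram f g : M f -> M g -> sip (W f) (W g) = (mxadj (Rm f) *m Rm g) 0 0.
Proof.
move=> hf hg; rewrite /sip ip_W // /Mip raddf_sum /=.
rewrite /Rm mxadj_sum mulmx_suml summxE; apply: eq_bigr => j _.
rewrite WsW // /Mact mulmx_suml raddf_sum mulmx_sumr summxE /=.
apply: eq_bigr => i _.
rewrite gram_term // PhisE ?blockalgM ?blockalg_adj //.
rewrite piM ?blockalg_adj // pi_adj // -dot_col mxadjM !mulmxA.
by [].
Qed.

Lemma gram_c f g c : M f -> M g -> c \in O ->
  \tr (c *m ip (W f) (W g)) = (mxadj (Rm f) *m (pi c *m Rm g)) 0 0.
Proof.
move=> hf hg hc; rewrite -ip_ractr // -W_ract //.
by rewrite -/(sip _ _) gram ?Rm_ract //; apply: M_ract.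
Qed.

Lemma kernel f g : M f -> M g -> Rm f = Rm g -> W f = W g.
Proof.
move=> hf hg hfg.
have hh := M_lin (-1) hg hf.
have hR0 : Rm (fun i => (-1) *: g i + f i) = 0.
  by rewrite Rm_lin // hfg scaleN1r addNr.
have : W (fun i => (-1) *: g i + f i) = 0.
  apply: ip_def => c hc; rewrite gram_c // hR0 mxadj0 mulmx0 mxE.
  by rewrite big1 // => k _; rewrite mxE mul0r.
rewrite W_lin // scaleN1r addrC => /eqP; rewrite subr_eq0 => /eqP.
by [].
Qed.

Lemma Phis1 : Phis 1%:M = 1%:M.
Proof.
move: hQC => [_ _ htr _]; move: hadj => [h1 h2].
have hO1 := blockalg1 C bO.
have hD : mxadj (Phis 1%:M) - 1%:M \in blockalg bI.
  by rewrite blockalgB ?blockalg_adj ?h1 // blockalg1.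
have : mxadj (Phis 1%:M) - 1%:M = 0.
  apply: (blockalg_tr_eq0 hD) => c hc; rewrite mxtrace_mulC mulmxBl mul1mx raddfB /=.
  by rewrite h2 // mxadj1 mul1mx htr // subrr.
move=> /eqP; rewrite subr_eq0 => /eqP e.
by rewrite -[Phis _]mxadjK e mxadj1.
Qed.

Lemma piV : pi 1%:M *m V = V.
Proof.
have hO1 := blockalg1 C bO.
have hadjP : mxadj (pi 1%:M) = pi 1%:M by rewrite -pi_adj // mxadj1.
have hPP : pi 1%:M *m pi 1%:M = pi 1%:M by rewrite -piM // mulmx1.
have e0 : mxadj V *m pi 1%:M *m V = 1%:M by rewrite -PhisE // Phis1.
have e1 : mxadj V *m (pi 1%:M *m V) = 1%:M by rewrite mulmxA e0.
have e2 : mxadj V *m pi 1%:M *m (pi 1%:M *m V) = 1%:M.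
  by rewrite mulmxA -(mulmxA (mxadj V) (pi 1%:M) (pi 1%:M)) hPP e0.
apply/eqP; rewrite eq_sym -subr_eq0; apply/eqP; apply: adjmx_eq0.
rewrite mxadjD mxadjN mxadjM hadjP mulmxBl !mulmxBr VV e1 e0 e2.
by rewrite !subrr ?subr0.
Qed.

Definition blk (s t : 'I_nO) : 'M[C]_nO := if bO s == bO t then delta_mx s t else 0.

Lemma blk_in s t : blk s t \in O.
Proof. by rewrite /blk; case: ifP => h; [exact: blockalg_delta | exact: blockalg0]. Qed.

Definition bk (j : 'I_nI) (s t : 'I_nO) : 'I_nI -> 'M[C]_nO :=
  fun i => if i == j then blk s t else 0.

Lemma M_bk j s t : M (bk j s t).
Proof. by move=> i; rewrite /bk; case: ifP => _; [exact: blk_in | exact: blockalg0]. Qed.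

Lemma Rm_bk j s t : Rm (bk j s t) = pi (blk s t) *m col j V.
Proof.
rewrite /Rm (bigD1 j) //= big1 ?addr0; first by rewrite /bk /= eqxx.
by move=> i /negbTE ij; rewrite /bk /= ij pi0 mul0mx.
Qed.

Definition Sm : 'M[C]_p :=
  (\sum_(k : 'I_nI * 'I_nO * 'I_nO) <<(Rm (bk k.1.1 k.1.2 k.2))^T>>)%MS.

Lemma trmx_sumE I (r : seq I) (F : I -> 'cV[C]_p) :
  (\sum_(k <- r) F k)^T = \sum_(k <- r) (F k)^T.
Proof.
apply/matrixP => i j; rewrite mxE !summxE; apply: eq_bigr => k _.
by rewrite mxE.
Qed.

Lemma blk_decomp x : x \in O -> x = \sum_s \sum_t x s t *: blk s t.
Proof.
move=> hx; rewrite {1}(matrix_sum_delta x); apply: eq_bigr => s _.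
apply: eq_bigr => t _; rewrite /blk; case: ifP => // hst.
by move/blockalgP: hx => ->; rewrite ?hst // !scale0r.
Qed.

Lemma Rm_decomp f : M f ->
  Rm f = \sum_j \sum_s \sum_t f j s t *: Rm (bk j s t).
Proof.
move=> hf; rewrite {1}/Rm; apply: eq_bigr => j _.
rewrite {1}(blk_decomp (hf j)) pi_sum; last first.
  by move=> s; apply: blockalg_sum => t _; rewrite blockalgZ ?blk_in.
rewrite mulmx_suml; apply: eq_bigr => s _.
rewrite pi_sum; last by move=> t; rewrite blockalgZ ?blk_in.
rewrite mulmx_suml; apply: eq_bigr => t _.
by rewrite Rm_bk piZ ?blk_in // scalemxAl.
Qed.

Lemma K1 f : M f -> ((Rm f)^T <= Sm)%MS.
Proof.
move=> hf; rewrite Rm_decomp // trmx_sumE; apply: summx_sub => j _.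
rewrite trmx_sumE; apply: summx_sub => s _.
rewrite trmx_sumE; apply: summx_sub => t _.
rewrite linearZ /=; apply: scalemx_sub.
apply: (sumsmx_sup (j, s, t)) => //=.
by rewrite genmxE.
Qed.

Lemma K2 (u : 'rV[C]_p) : (u <= Sm)%MS -> exists2 f, M f & u = (Rm f)^T.
Proof.
move/sub_sumsmxP => [u_ hu].
have H : forall k : 'I_nI * 'I_nO * 'I_nO, exists a : C,
    u_ k *m <<(Rm (bk k.1.1 k.1.2 k.2))^T>>%MS = a *: (Rm (bk k.1.1 k.1.2 k.2))^T.
  move=> k; apply/sub_rVP.
  by have := submxMl (u_ k) <<(Rm (bk k.1.1 k.1.2 k.2))^T>>%MS; rewrite genmxE.
have [a ha] := fchoice H.
exists (fun j => \sum_(k : 'I_nI * 'I_nO * 'I_nO) a k *: bk k.1.1 k.1.2 k.2 j).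
  by move=> j; apply: blockalg_sum => k _; rewrite blockalgZ ?M_bk.
rewrite Rm_sum; last by move=> k; exact: M_bk.
rewrite trmx_sumE hu; apply: eq_bigr => k _.
by rewrite ha linearZ.
Qed.

Lemma cV_decomp n (a : 'cV[C]_n) : a = \sum_k a k 0 *: delta_mx k 0.
Proof.
rewrite {1}(matrix_sum_delta a); apply: eq_bigr => k _.
by rewrite big_ord1.
Qed.

Lemma colmxE n m (F : 'cV[C]_n -> 'cV[C]_m) :
  (forall c a b, F (c *: a + b) = c *: F a + F b) ->
  forall a, (\matrix_(k, l) F (delta_mx l 0) k 0) *m a = F a.
Proof.
move=> hF.
have F0 : F 0 = 0.
  have h := hF 1 0 0; rewrite !scale1r addr0 in h.
  by apply: (addrI (F 0)); rewrite -h addr0.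
have Fs : forall (r : seq 'I_n) (c : 'I_n -> C),
    F (\sum_(k <- r) c k *: delta_mx k 0) = \sum_(k <- r) c k *: F (delta_mx k 0).
  move=> r c; elim: r => [|k r IH]; first by rewrite !big_nil F0.
  by rewrite !big_cons hF IH.
move=> a; rewrite [in RHS](cV_decomp a) Fs.
apply/matrixP => k z; rewrite ord1 !mxE summxE; apply: eq_bigr => l _.
by rewrite !mxE mulrC.
Qed.

Lemma V_entry (T0 : 'M[C]_p) i j :
  (mxadj V *m T0 *m V) i j = (mxadj (col i V) *m (T0 *m col j V)) 0 0.
Proof. by rewrite mulmxA dot_col. Qed.

Lemma Rm_eps i : Rm (eps i) = col i V.
Proof.
rewrite /Rm (bigD1 i) //= big1 ?addr0.
  by rewrite /eps /= eqxx colE mulmxA piV -colE.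
by move=> j /negbTE ji; rewrite /eps /= ji pi0 mul0mx.
Qed.

Lemma ip_sumr0 I (r : seq I) (F : I -> E) xi :
  ip xi (\sum_(k <- r) F k) = \sum_(k <- r) ip xi (F k).
Proof.
elim: r => [|k r IH]; first by rewrite !big_nil ip0r.
by rewrite !big_cons ipDr IH.
Qed.

Section WithP.
Variable P0 : 'M[C]_p.
Hypothesis hP0a : mxadj P0 = P0.
Hypothesis hP0f : forall f, M f -> P0 *m Rm f = Rm f.
Hypothesis hP0r : forall a : 'cV[C]_p, exists2 f, M f & P0 *m a = Rm f.
Variable Fk : 'I_p -> 'I_nI -> 'M[C]_nO.
Hypothesis hFkM : forall k, M (Fk k).
Hypothesis hFkR : forall k, Rm (Fk k) = P0 *m delta_mx k 0.

Lemma P0comm x : x \in O -> pi x *m P0 = P0 *m pi x.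
Proof.
have gen : forall y, y \in O -> pi y *m P0 = P0 *m pi y *m P0.
  move=> y hy; apply: colmx_eq => a; have [f hf e] := hP0r a.
  rewrite -!mulmxA e -Rm_ract // hP0f //; exact: M_ract.
move=> hx.
have e : P0 *m pi x = P0 *m pi x *m P0.
  have := gen _ (blockalg_adj hx); move/(congr1 (@mxadj C _ _)).
  by rewrite pi_adj // !mxadjM !mxadjK hP0a mulmxA.
by rewrite gen // -e.
Qed.

Definition Q (a : 'cV[C]_p) : 'I_nI -> 'M[C]_nO := fun j => \sum_k a k 0 *: Fk k j.

Lemma M_Q a : M (Q a).
Proof. by move=> j; apply: blockalg_sum => k _; rewrite blockalgZ ?hFkM. Qed.

Lemma Rm_Q a : Rm (Q a) = P0 *m a.
Proof.
rewrite /Q Rm_sum // [in RHS](cV_decomp a) mulmx_sumr.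
by apply: eq_bigr => k _; rewrite hFkR scalemxAr.
Qed.

Definition U a := W (Q a).

Lemma U_lin c a b : U (c *: a + b) = c *: U a + U b.
Proof.
rewrite /U -W_lin; [|exact: M_Q|exact: M_Q].
apply: kernel; [exact: M_Q | exact: M_lin (M_Q _) (M_Q _) |].
by rewrite Rm_lin; [rewrite !Rm_Q mulmxDr scalemxAr | exact: M_Q | exact: M_Q].
Qed.

Lemma U0 : U 0 = 0.
Proof.
have h := U_lin 1 0 0; rewrite !scale1r addr0 in h.
by apply: (addrI (U 0)); rewrite -h addr0.
Qed.

Lemma U_expand a : U a = \sum_k a k 0 *: U (delta_mx k 0).
Proof.
rewrite {1}(cV_decomp a).
elim: (index_enum _) => [|k r IH]; first by rewrite !big_nil U0.
by rewrite !big_cons U_lin IH.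
Qed.

Definition U' (eta : E) : 'cV[C]_p := \col_k sip (U (delta_mx k 0)) eta.

Lemma U'_lin c eta zeta : U' (c *: eta + zeta) = c *: U' eta + U' zeta.
Proof. by apply/matrixP => k z; rewrite !mxE sipDr sipZr. Qed.

Lemma sipU a eta : sip (U a) eta = (mxadj a *m U' eta) 0 0.
Proof.
rewrite U_expand sip_suml mxE; apply: eq_bigr => k _.
by rewrite mxadjE !mxE.
Qed.

Lemma U_pi x a : x \in O -> U (pi x *m a) = ract (U a) x.
Proof.
move=> hx; rewrite /U -W_ract //; last exact: M_Q.
apply: kernel; [exact: M_Q | exact: M_ract (M_Q _) hx |].
by rewrite Rm_ract //; [rewrite !Rm_Q !mulmxA P0comm | exact: M_Q].
Qed.

Lemma U'_ract x eta : x \in O -> U' (ract eta x) = pi x *m U' eta.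
Proof.
move=> hx; apply/matrixP => k z; rewrite ord1 mxE.
rewrite sip_ractr // -sip_ractl // -U_pi ?blockalg_adj // sipU pi_adj //.
by rewrite mxadjM mxadjK -mulmxA dot_delta.
Qed.

Lemma UVe i : U (col i V) = W (eps i).
Proof.
apply: kernel; [exact: M_Q | exact: M_eps |].
by rewrite Rm_Q Rm_eps -{1}Rm_eps hP0f ?Rm_eps //; exact: M_eps.
Qed.

Lemma U'We i : U' (W (eps i)) = col i V.
Proof.
apply/matrixP => k z; rewrite ord1 mxE /U gram; [|exact: M_Q|exact: M_eps].
rewrite Rm_Q mxadjM hP0a -mulmxA -Rm_eps (hP0f (M_eps i)).
by rewrite dot_delta.
Qed.

Lemma dir1 Y : (exists2 X, in_conf_multigraph bO ract ip W Ws X & ptrace X = Y) ->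
  in_conf_graph bO pi V Y.
Proof.
move=> [X [hXO [T [hT1 hT2 _] hT]] <-].
pose F := fun a => U' (T (U a)).
have Flin : forall c a b, F (c *: a + b) = c *: F a + F b.
  by move=> c a b; rewrite /F U_lin hT1 U'_lin.
have hF := colmxE Flin.
exists (\matrix_(k, l) F (delta_mx l 0) k 0).
  move=> x hx; apply: colmx_eq => a.
  rewrite -!mulmxA !hF /F U_pi // hT2 // U'_ract //.
apply/matrixP => i j; rewrite /ptrace mxE V_entry hF /F -sipU !UVe.
rewrite -Mact_eps hT; last exact: M_eps.
by rewrite Ws_eps.
Qed.

Definition Tof (T0 : 'M[C]_p) (eta : E) : E := U (T0 *m U' eta).

Lemma Tof_lin T0 c xi eta : Tof T0 (c *: xi + eta) = c *: Tof T0 xi + Tof T0 eta.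
Proof. by rewrite /Tof U'_lin mulmxDr -scalemxAr U_lin. Qed.

Lemma Tof0 T0 : Tof T0 0 = 0.
Proof.
have h := Tof_lin T0 1 0 0; rewrite !scale1r addr0 in h.
by apply: (addrI (Tof T0 0)); rewrite -h addr0.
Qed.

Lemma Tof_sum T0 I (r : seq I) (F : I -> E) :
  Tof T0 (\sum_(k <- r) F k) = \sum_(k <- r) Tof T0 (F k).
Proof.
elim: r => [|k r IH]; first by rewrite !big_nil Tof0.
have TofD : forall x y, Tof T0 (x + y) = Tof T0 x + Tof T0 y.
  by move=> x y; have := Tof_lin T0 1 x y; rewrite !scale1r.
by rewrite !big_cons TofD IH.
Qed.

Lemma dir2 Y : in_conf_graph bO pi V Y ->
  exists2 X, in_conf_multigraph bO ract ip W Ws X & ptrace X = Y.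
Proof.
move=> [T0 hT0 ->].
have hTr : forall xi a, a \in O -> Tof T0 (ract xi a) = ract (Tof T0 xi) a.
  move=> xi a ha; rewrite /Tof U'_ract // mulmxA hT0 // -mulmxA U_pi //.
have hT0a : forall c, c \in O -> mxadj T0 *m pi c = pi c *m mxadj T0.
  move=> c hc; have := hT0 _ (blockalg_adj hc); move/(congr1 (@mxadj C _ _)).
  by rewrite !mxadjM pi_adj // mxadjK.
exists (fun i j => ip (W (eps i)) (Tof T0 (W (eps j)))).
  split; first by move=> i j; exact: ip_in.
  exists (Tof T0).
    split.
    - by move=> c xi eta; rewrite Tof_lin.
    - by move=> xi a ha; rewrite hTr.
    - exists (Tof (mxadj T0)) => xi eta.
      apply/eqP; rewrite -subr_eq0; apply/eqP.
      apply: (blockalg_tr_eq0 (blockalgB (ip_in _ _) (ip_in _ _))) => c hc.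
      rewrite mulmxBr raddfB /=; apply/eqP; rewrite subr_eq0; apply/eqP.
      rewrite -!/(sip _ _) -!sip_ractr // /Tof -U_pi //.
      rewrite sipU U'_ract // sipC sipU -mxadjE.
      rewrite [in RHS]mxadjM mxadjK [in LHS]mxadjM !mulmxA.
      by rewrite -(mulmxA (mxadj (U' xi))) hT0a // mulmxA.
  move=> f hf i.
  rewrite Ws_eps (W_decomp hf) Tof_sum ip_sumr0 /Mact.
  apply: eq_bigr => j _.
  by rewrite hTr // ip_ractr.
apply/matrixP => i j; rewrite /ptrace mxE V_entry -/(sip _ _) /Tof.
rewrite sipC sipU !U'We -mxadjE mxadjM mxadjK.
by [].
Qed.

End WithP.

End Main.

Unset Implicit Arguments.


Theorem proposition3p15 (R : realType)
    (nI : nat) (bI : 'I_nI -> nat) (nO : nat) (bO : 'I_nO -> nat)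
    (Phi : 'M[R[i]]_nI -> 'M[R[i]]_nO) (Phis : 'M[R[i]]_nO -> 'M[R[i]]_nI) :
  quantum_channel bI bO Phi ->
  hs_adjoint bI bO Phi Phis ->
  forall (E : vectType R[i]) (ract : E -> 'M[R[i]]_nO -> E) (ip : E -> E -> 'M[R[i]]_nO)
         (W : ('I_nI -> 'M[R[i]]_nO) -> E) (Ws : E -> 'I_nI -> 'M[R[i]]_nO),
  hilbert_Oop_module bO ract ip ->
  stinespring_module bI bO Phi ract ip W Ws ->
  forall (p : nat) (pi : 'M[R[i]]_nO -> 'M[R[i]]_p) (V : 'M[R[i]]_(p, nI)),
  stinespring_rep bO Phis pi V ->
  forall Y : 'M[R[i]]_nI,
    (exists2 X, in_conf_multigraph bO ract ip W Ws X & ptrace X = Y) <->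
    in_conf_graph bO pi V Y.
Proof.
move=> hQC hadj E ract ip W Ws hH hS p pi V hR Y.
have [P0 [hP0a hfix hrng]] := orth_proj (Sm bO pi V).
have hP0f : forall f, inM bO f -> P0 *m Rm pi V f = Rm pi V f.
  by move=> f hf; apply: hfix; exact (K1 hR hf).
have hP0r : forall a : 'cV[R[i]]_p, exists2 f, inM bO f & P0 *m a = Rm pi V f.
  move=> a; have [f hf e] := K2 hR (hrng a).
  by exists f => //; rewrite -[LHS]trmxK e trmxK.
have hP0r' : forall k : 'I_p, exists f, inM bO f /\ P0 *m delta_mx k 0 = Rm pi V f.
  by move=> k; case: (hP0r (delta_mx k 0)) => f hf e; exists f.
have [Fk hFk] := fchoice hP0r'.
have hFkM : forall k, inM bO (Fk k) by move=> k; case: (hFk k).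
have hFkR : forall k, Rm pi V (Fk k) = P0 *m delta_mx k 0.
  by move=> k; case: (hFk k).
split.
- exact: (dir1 hQC hadj hH hS hR hP0a hP0f hP0r hFkM hFkR).
- exact: (dir2 hQC hadj hH hS hR hP0a hP0f hP0r hFkM hFkR).
Qed.
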